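(* Let $G=(V,E)$ be an undirected graph having a strongly connected orientation. A strongly connected orientation $D$ of $G$ is decreasingly minimal among the strongly connected orientations of $G$ if and only if there are no nodes $s,t$ with $\varrho_D(t)\ge\varrho_D(s)+2$ such that $D$ contains two arc-disjoint directed paths from $s$ to $t$.
   Context: $\varrho_D(v)$ is the number of arcs with head $v$. An orientation is decreasingly minimal among a class if its in-degree vector has largest component as small as possible within the class, then second largest as small as possible, and so on. *)

(* Defs.v *)
From mathcomp Require Import all_boot.
Set Implicit Arguments. Unset Strict Implicit. Unset Printing Implicit Defensive.

(* An undirected (multi)graph G = (V, E) is given by finite types V, E and
   the two endpoints  end1 e, end2 e  of every edge e.  An orientation is a
   function  D : E -> bool : D e = true orients e from end1 e to end2 e,
   D e = false orients e from end2 e to end1 e. *)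

Section Orient.
Variables (V E : finType) (end1 end2 : E -> V).

Definition arc_tail (D : E -> bool) (e : E) : V := if D e then end1 e else end2 e.
Definition arc_head (D : E -> bool) (e : E) : V := if D e then end2 e else end1 e.

Definition indeg (D : E -> bool) (v : V) : nat := #|[set e | arc_head D e == v]|.

Fixpoint dwalk (D : E -> bool) (x t : V) (p : seq E) : bool :=
  match p with
  | [::] => x == t
  | e :: p' => (arc_tail D e == x) && dwalk D (arc_head D e) t p'
  end.

Definition dpath (D : E -> bool) (s t : V) (p : seq E) : bool :=
  dwalk D s t p && uniq (s :: map (arc_head D) p).

Definition strongly_connected (D : E -> bool) : Prop :=
  forall x y : V, exists p : seq E, dpath D x y p.

Definition sorted_indeg (D : E -> bool) : seq nat :=
  sort (fun a b => b <= a) [seq indeg D v | v <- enum V].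

Fixpoint lex_le (s1 s2 : seq nat) : bool :=
  match s1, s2 with
  | [::], _ => true
  | _ :: _, [::] => false
  | a :: s1', b :: s2' => (a < b) || ((a == b) && lex_le s1' s2')
  end.

Definition decmin_strong (D : E -> bool) : Prop :=
  strongly_connected D /\
  forall D' : E -> bool, strongly_connected D' ->
    lex_le (sorted_indeg D) (sorted_indeg D').

End Orient.

(* Main.v *)
Require Import Defs.
From mathcomp Require Import all_boot zify.
From Stdlib Require Import ClassicalEpsilon.
Set Implicit Arguments. Unset Strict Implicit. Unset Printing Implicit Defensive.

Section Aux.
Variables (V E : finType) (end1 end2 : E -> V).
Local Notation hd := (arc_head end1 end2).
Local Notation tl := (arc_tail end1 end2).
Local Notation walk := (dwalk end1 end2).
Local Notation dp := (dpath end1 end2).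

Lemma walk_rcons D x y p e : walk D x y p -> tl D e = y -> walk D x (hd D e) (rcons p e).
Proof.
elim: p x => [|f p IH] x /=.
  by move=> /eqP -> ->; rewrite !eqxx.
by case/andP=> -> /IH H /H ->.
Qed.

Lemma dp_uniq D x y p : dp D x y p -> uniq p.
Proof. by case/andP=> _ /= /andP [_ /map_uniq]. Qed.

Lemma dp_suffix D x t q y : dp D x t q -> y \in x :: map (hd D) q ->
  exists r, dp D y t r /\ {subset r <= q}.
Proof.
elim: q x => [|e q IH] x.
  rewrite inE => H /eqP ->; by exists [::]; split.
move=> H; rewrite in_cons; case/orP => [/eqP ->|Hy]; first by exists (e :: q); split.
have H' : dp D (hd D e) t q.
  move: H; rewrite /dpath /= => /andP [/andP [_ H1]] /andP [_ H2].
  by rewrite H1 H2.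
have [r [Hr Hs]] := IH _ H' Hy.
by exists r; split=> // f /Hs; rewrite inE orbC => ->.
Qed.

Lemma walk_to_path D s t p : walk D s t p -> exists q, dp D s t q /\ {subset q <= p}.
Proof.
elim: p s => [|e p IH] s /=.
  by move=> /eqP ->; exists [::]; rewrite /dpath /= eqxx; split.
case/andP=> /eqP Htl /IH [q [Hq Hs]].
case: (boolP (s \in hd D e :: map (hd D) q)) => Hin.
  have [r [Hr Hrs]] := dp_suffix Hq Hin.
  by exists r; split=> // f /Hrs /Hs; rewrite inE orbC => ->.
exists (e :: q); split.
  move: Hq; rewrite /dpath /= Htl eqxx /= => /andP [-> ->]; by rewrite andbT.
by move=> f; rewrite !inE => /orP [->|/Hs ->] //; rewrite orbT.
Qed.

Lemma walk_bal D (phi : V -> nat) x y p : walk D x y p ->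
  \sum_(e <- p) phi (hd D e) + phi x = \sum_(e <- p) phi (tl D e) + phi y.
Proof.
elim: p x => [|e p IH] x /=.
  by move=> /eqP ->; rewrite !big_nil.
case/andP=> /eqP Ht /IH H; rewrite !big_cons Ht; lia.
Qed.

Lemma walk_enters D x y p (Z : {set V}) : walk D x y p -> x \notin Z -> y \in Z ->
  has (fun e => (hd D e \in Z) && (tl D e \notin Z)) p.
Proof.
elim: p x => [|e p IH] x /=.
  by move=> /eqP -> /negbTE ->.
case/andP=> /eqP Ht Hw Hx Hy.
case: (boolP (hd D e \in Z)) => Hh /=; first by rewrite Ht Hx.
exact: IH _ Hw Hh Hy.
Qed.

Lemma sum_seq_uniq (p : seq E) (f : E -> nat) : uniq p ->
  \sum_(e <- p) f e = \sum_e (e \in p) * f e.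
Proof.
move=> U; rewrite big_uniq // big_mkcond /=; apply: eq_bigr => e _.
by case: (e \in p); rewrite ?mul1n ?mul0n.
Qed.

Lemma sum_ge_term (f : E -> nat) e0 : f e0 <= \sum_e f e.
Proof. by rewrite (bigD1 e0) //= leq_addr. Qed.

Lemma sum_ge_two (f : E -> nat) e1 e2 : e1 != e2 -> f e1 + f e2 <= \sum_e f e.
Proof.
move=> H; rewrite (bigD1 e1) //= (bigD1 e2) /=; last by rewrite eq_sym.
rewrite addnA; exact: leq_addr.
Qed.

Lemma sum_pos_ex (b : E -> bool) : 0 < \sum_e (b e : nat) -> exists e, b e.
Proof.
case: (boolP [exists e, b e]) => [/existsP //|/existsPn H].
by rewrite big1 // => e _; rewrite (negbTE (H e)).
Qed.


Definition flip (D : E -> bool) (P : seq E) : E -> bool :=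
  fun e => if e \in P then ~~ D e else D e.
Definition ent (D : E -> bool) (Z : {set V}) : nat :=
  \sum_e ((hd D e \in Z) && (tl D e \notin Z)).

Lemma hd_flip D P e : hd (flip D P) e = if e \in P then tl D e else hd D e.
Proof. by rewrite /arc_head /arc_tail /flip; case: (e \in P); case: (D e). Qed.
Lemma tl_flip D P e : tl (flip D P) e = if e \in P then hd D e else tl D e.
Proof. by rewrite /arc_head /arc_tail /flip; case: (e \in P); case: (D e). Qed.

Lemma indegE D v : indeg end1 end2 D v = \sum_e (hd D e == v).
Proof.
rewrite /indeg -sum1dep_card big_mkcond /=; apply: eq_bigr => e _.
by case: (_ == _).
Qed.

Lemma flip_indeg D s t P v : dp D s t P ->
  indeg end1 end2 (flip D P) v + (t == v) = indeg end1 end2 D v + (s == v).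
Proof.
move=> HP; have U := dp_uniq HP.
have B := walk_bal (fun x => ((x == v) : nat)) (proj1 (andP HP)).
rewrite /= !(sum_seq_uniq _ U) in B.
have K : indeg end1 end2 (flip D P) v + \sum_e (e \in P) * (hd D e == v)
       = indeg end1 end2 D v + \sum_e (e \in P) * (tl D e == v).
  rewrite !indegE -!big_split; apply: eq_bigr => e _ /=; rewrite hd_flip.
  by case: (e \in P); rewrite ?mul1n ?mul0n ?addn0 // addnC.
lia.
Qed.

Lemma flip_ent D s t P Z : dp D s t P ->
  ent (flip D P) Z + (t \in Z) = ent D Z + (s \in Z).
Proof.
move=> HP; have U := dp_uniq HP.
have B := walk_bal (fun x => ((x \in Z) : nat)) (proj1 (andP HP)).
rewrite /= !(sum_seq_uniq _ U) in B.
have K : ent (flip D P) Z + \sum_e (e \in P) * (hd D e \in Z)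
       = ent D Z + \sum_e (e \in P) * (tl D e \in Z).
  rewrite /ent -!big_split; apply: eq_bigr => e _ /=; rewrite hd_flip tl_flip.
  case: (e \in P); rewrite ?mul1n ?mul0n ?addn0 //.
  by case: (hd D e \in Z); case: (tl D e \in Z).
lia.
Qed.

Definition cstrong D := forall (Z : {set V}) x y, x \notin Z -> y \in Z -> 0 < ent D Z.

Lemma strong_cstrong D : strongly_connected end1 end2 D -> cstrong D.
Proof.
move=> HD Z x y Hx Hy; have [p /andP [Hw _]] := HD x y.
have /hasP [e _ He] := walk_enters Hw Hx Hy.
by apply: leq_trans (sum_ge_term _ e); rewrite He.
Qed.

Definition decb (P : Prop) : bool := if excluded_middle_informative P then true else false.
Lemma decbP P : reflect P (decb P).
Proof. by rewrite /decb; case: excluded_middle_informative => h; constructor. Qed.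

Lemma reach_cut D (S : pred E) x y :
  (forall Z : {set V}, y \in Z -> x \notin Z ->
     [exists e, [&& S e, hd D e \in Z & tl D e \notin Z]]) ->
  exists p, dp D x y p /\ all S p.
Proof.
move=> H.
pose R := [set v | decb (exists p, walk D x v p /\ all S p)].
have HR v : reflect (exists p, walk D x v p /\ all S p) (v \in R).
  by rewrite inE; apply: decbP.
case: (boolP (y \in R)) => [/HR [p [Hw Ha]]|Hy].
  have [q [Hq Hs]] := walk_to_path Hw; exists q; split => //.
  by apply/allP => e /Hs; move/allP: Ha; apply.
have Hx : x \in R by apply/HR; exists [::]; rewrite /= eqxx.
have Hy' : y \in ~: R by rewrite inE.
have Hx' : x \notin ~: R by rewrite inE negbK.
have /existsP [e /and3P [Se Hh Ht]] := H (~: R) Hy' Hx'.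
move: Ht; rewrite inE negbK => /HR [p [Hw Ha]].
move: Hh; rewrite inE => /HR; case; exists (rcons p e); split.
  exact: walk_rcons Hw _.
by rewrite all_rcons Se.
Qed.

Lemma cstrong_strong D : cstrong D -> strongly_connected end1 end2 D.
Proof.
move=> HD x y.
have [|p [Hp _]] := @reach_cut D predT x y; last by exists p.
move=> Z Hy Hx; have /sum_pos_ex [e He] := HD Z x y Hx Hy.
by apply/existsP; exists e.
Qed.

Definition ins (S : pred E) D v := \sum_e (S e && (hd D e == v)).
Definition outs (S : pred E) D v := \sum_e (S e && (tl D e == v)).

Lemma sum_eq_in (R : {set V}) u : \sum_(v in R) ((u == v) : nat) = (u \in R).
Proof.
rewrite big_mkcond /= (bigD1 u) //= big1 => [|v Hv].
  by rewrite eqxx addn0; case: (u \in R).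
by rewrite eq_sym (negbTE Hv); case: (v \in R).
Qed.

Lemma sum_swap_in (S : pred E) (f : E -> V) (R : {set V}) :
  \sum_(v in R) \sum_e ((S e && (f e == v)) : nat) = \sum_e ((S e && (f e \in R)) : nat).
Proof.
rewrite exchange_big; apply: eq_bigr => e _.
case: (S e) => /=; first exact: sum_eq_in.
by rewrite big1.
Qed.

Lemma balance_reach D (S : pred E) s t : s != t ->
  (forall v, v != t -> ins S D v <= outs S D v) -> ins S D s < outs S D s ->
  exists p, dp D s t p /\ all S p.
Proof.
move=> Hst Hle Hlt; apply: reach_cut => Z Ht Hs.
case: (boolP [exists e, _]) => // /existsPn Hn; exfalso.
pose R := ~: Z.
have E1 := sum_swap_in S (tl D) R.
have E2 := sum_swap_in S (hd D) R.
have L : \sum_e ((S e && (tl D e \in R)) : nat) <= \sum_e ((S e && (hd D e \in R)) : nat).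
  apply: leq_sum => e _; have := Hn e; rewrite !inE.
  by case: (S e); case: (hd D e \in Z); case: (tl D e \in Z).
have HsR : s \in R by rewrite inE.
have G : \sum_(v in R) ins S D v < \sum_(v in R) outs S D v.
  rewrite (bigD1 s) //= [X in _ < X](bigD1 s) //=.
  have : \sum_(v in R | v != s) ins S D v <= \sum_(v in R | v != s) outs S D v.
    apply: leq_sum => v /andP [Hv _]; apply: Hle.
    by apply: contraTneq Hv => ->; rewrite inE negbK.
  move: Hlt; clear; lia.
rewrite /ins /outs in G; move: E1 E2 L G; clear; lia.
Qed.

Lemma menger2 D s t : strongly_connected end1 end2 D -> s != t ->
  (forall Z : {set V}, t \in Z -> s \notin Z -> ent D Z != 1) ->
  exists p1 p2, [/\ dp D s t p1, dp D s t p2 & ~~ has (fun e => e \in p2) p1].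
Proof.
move=> HD Hst Hcut.
have HcD := strong_cstrong HD.
have [P HP] := HD s t.
pose D1 := flip D P.
have [Q [HQ _]] : exists Q, dp D1 s t Q /\ all predT Q.
  apply: reach_cut => Z Ht Hs.
  have F := flip_ent Z HP; rewrite Ht (negbTE Hs) in F.
  have H1 := HcD Z s t Hs Ht; have /eqP H2 := Hcut Z Ht Hs.
  have : 0 < ent D1 Z by rewrite /D1; move: F H1 H2; clear; lia.
  by move/sum_pos_ex => [e He]; apply/existsP; exists e.
pose S := fun e => (e \in P) (+) (e \in Q).
have UP := dp_uniq HP; have UQ := dp_uniq HQ.
have Bal v : ins S D v + 2 * (s == v) = outs S D v + 2 * (t == v).
  have BP := walk_bal (fun x => ((x == v) : nat)) (proj1 (andP HP)).
  rewrite /= !(sum_seq_uniq _ UP) in BP.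
  have BQ := walk_bal (fun x => ((x == v) : nat)) (proj1 (andP HQ)).
  rewrite /= !(sum_seq_uniq _ UQ) in BQ.
  have K : \sum_e (e \in P) * (tl D e == v) + \sum_e (e \in Q) * (tl D1 e == v) + ins S D v
         = \sum_e (e \in P) * (hd D e == v) + \sum_e (e \in Q) * (hd D1 e == v) + outs S D v.
    rewrite /ins /outs -!big_split; apply: eq_bigr => e _ /=.
    rewrite /D1 hd_flip tl_flip /S.
    by case: (e \in P); case: (e \in Q) => /=; lia.
  move: BP BQ K; clear; lia.
have [W1 [HW1 AW1]] : exists p, dp D s t p /\ all S p.
  apply: (balance_reach Hst).
    move=> v Hv; have := Bal v; rewrite [t == v]eq_sym (negbTE Hv); lia.
  have := Bal s; rewrite eqxx [t == s]eq_sym (negbTE Hst); lia.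
pose S2 := fun e => S e && (e \notin W1).
have UW := dp_uniq HW1.
have Bal2 v : ins S2 D v + (s == v) = outs S2 D v + (t == v).
  have BW := walk_bal (fun x => ((x == v) : nat)) (proj1 (andP HW1)).
  rewrite /= !(sum_seq_uniq _ UW) in BW.
  have K1 : ins S D v = ins S2 D v + \sum_e (e \in W1) * (hd D e == v).
    rewrite /ins -big_split; apply: eq_bigr => e _ /=; rewrite /S2.
    case: (boolP (e \in W1)) => He /=.
      by rewrite (allP AW1 e He) andbF /= mul1n.
    by rewrite andbT mul0n addn0.
  have K2 : outs S D v = outs S2 D v + \sum_e (e \in W1) * (tl D e == v).
    rewrite /outs -!big_split; apply: eq_bigr => e _ /=; rewrite /S2.
    case: (boolP (e \in W1)) => He /=.
      by rewrite (allP AW1 e He) andbF /= mul1n.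
    by rewrite andbT mul0n addn0.
  have := Bal v; move: BW K1 K2; clear; lia.
have [W2 [HW2 AW2]] : exists p, dp D s t p /\ all S2 p.
  apply: (balance_reach Hst).
    move=> v Hv; have := Bal2 v; rewrite [t == v]eq_sym (negbTE Hv); lia.
  have := Bal2 s; rewrite eqxx [t == s]eq_sym (negbTE Hst); lia.
exists W1, W2; split => //.
apply/hasPn => e He; apply/negP => He2.
by have := allP AW2 e He2; rewrite /S2 He andbF.
Qed.

Definition intight D Z := ent D Z == 1.
Definition revo (D : E -> bool) : E -> bool := fun e => ~~ D e.

Lemma hd_revo D e : hd (revo D) e = tl D e.
Proof. by rewrite /arc_head /arc_tail /revo; case: (D e). Qed.
Lemma tl_revo D e : tl (revo D) e = hd D e.
Proof. by rewrite /arc_head /arc_tail /revo; case: (D e). Qed.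

Lemma ent_revo D Z : ent (revo D) (~: Z) = ent D Z.
Proof.
rewrite /ent; apply: eq_bigr => e _; rewrite hd_revo tl_revo !inE negbK.
by rewrite andbC.
Qed.

Lemma cstrong_revo D : cstrong D -> cstrong (revo D).
Proof.
move=> HD Z x y Hx Hy; rewrite -[Z]setCK ent_revo.
by apply: (HD _ y x); rewrite inE ?negbK.
Qed.

Lemma ent_pos_ex D Z : 0 < ent D Z -> exists x y, x \notin Z /\ y \in Z.
Proof.
by move/sum_pos_ex => [e /andP [H1 H2]]; exists (tl D e), (hd D e).
Qed.

Lemma submod D Z1 Z2 : ent D (Z1 :|: Z2) + ent D (Z1 :&: Z2) <= ent D Z1 + ent D Z2.
Proof.
rewrite /ent -!big_split; apply: leq_sum => e _ /=; rewrite !inE.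
by case: (hd D e \in Z1); case: (hd D e \in Z2); case: (tl D e \in Z1); case: (tl D e \in Z2).
Qed.

Lemma tight_union D Z1 Z2 x w : cstrong D -> intight D Z1 -> intight D Z2 ->
  x \in Z1 -> x \in Z2 -> w \notin Z1 -> w \notin Z2 -> intight D (Z1 :|: Z2).
Proof.
move=> HD H1 H2 x1 x2 w1 w2.
have S := submod D Z1 Z2.
have A : 0 < ent D (Z1 :|: Z2) by apply: (HD _ w x); rewrite !inE ?negb_or ?w1 ?w2 ?x1.
have B : 0 < ent D (Z1 :&: Z2) by apply: (HD _ w x); rewrite !inE ?negb_and ?w1 ?x1 ?x2.
rewrite /intight in H1 H2 *; move/eqP: H1 => H1; move/eqP: H2 => H2; apply/eqP.
move: S A B; rewrite H1 H2; clear; lia.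
Qed.

Lemma blocks D (U : {set V}) w : cstrong D -> w \notin U ->
  (forall u, u \in U -> exists Z, [/\ intight D Z, u \in Z & Z \subset U]) ->
  exists P : {set {set V}}, [/\ trivIset P, cover P = U & forall B, B \in P -> intight D B].
Proof.
move=> HD wU HU.
pose Pr := fun B : {set V} => intight D B && (B \subset U).
exists [set B | maxset Pr B]; split.
- apply/trivIsetP => A B; rewrite !inE => HA HB AB.
  rewrite -setI_eq0; apply/negPn/negP => /set0Pn [x]; rewrite inE => /andP [xA xB].
  have /andP [tA sA] := maxsetp HA; have /andP [tB sB] := maxsetp HB.
  have wA : w \notin A by apply: contra wU; apply: (subsetP sA).
  have wB : w \notin B by apply: contra wU; apply: (subsetP sB).
  have tAB := tight_union HD tA tB xA xB wA wB.
  have PrAB : Pr (A :|: B) by rewrite /Pr tAB subUset sA sB.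
  have E1 := maxsetsup HA PrAB (subsetUl A B).
  have E2 := maxsetsup HB PrAB (subsetUr A B).
  by move/eqP: AB; apply; apply: (etrans (esym E1) E2).
- apply/setP => u; apply/bigcupP/idP.
    move=> [B]; rewrite inE => /maxsetp /andP [_ sB]; exact: (subsetP sB).
  move=> Hu; have [Z [tZ uZ sZ]] := HU u Hu.
  have PrZ : Pr Z by rewrite /Pr tZ sZ.
  have [A HA sZA] := maxset_exists PrZ.
  by exists A; [rewrite inE | exact: (subsetP sZA)].
- by move=> B; rewrite inE => /maxsetp /andP [].
Qed.

Definition cross (P : {set {set V}}) : nat :=
  \sum_e [&& end1 e \in cover P, end2 e \in cover P & pblock P (end1 e) != pblock P (end2 e)].

Lemma pb_eq (P : {set {set V}}) x B : trivIset P -> B \in P ->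
  (x \in B) = (x \in cover P) && (pblock P x == B).
Proof.
move=> TP HB; case: (boolP (x \in B)) => xB.
  have xC : x \in cover P by apply/bigcupP; exists B.
  by rewrite xC (def_pblock TP HB xB) eqxx.
apply/esym/negbTE/negP => /andP [xC /eqP Ep].
by move: xB; rewrite -Ep mem_pblock xC.
Qed.

Lemma cross_edge (P : {set {set V}}) h t : trivIset P ->
  \sum_(B in P) ((h \in B) && (t \notin B) : nat) =
  ((h \in cover P) && (t \notin cover P) : nat) +
  [&& h \in cover P, t \in cover P & pblock P h != pblock P t].
Proof.
move=> TP; case: (boolP (h \in cover P)) => hC /=.
  have HB0 := pblock_mem hC.
  rewrite (bigD1 (pblock P h)) //= big1 => [|B /andP [HB HBne]].
    rewrite mem_pblock hC /= (pb_eq t TP HB0) addn0.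
    by case: (t \in cover P) => //=; rewrite eq_sym; case: (_ == _).
  by rewrite (pb_eq h TP HB) hC /= eq_sym (negbTE HBne).
by rewrite big1 // => B HB; rewrite (pb_eq h TP HB) (negbTE hC).
Qed.

Lemma cross_formula D (P : {set {set V}}) : trivIset P ->
  ent D (cover P) + cross P = \sum_(B in P) ent D B.
Proof.
move=> TP; rewrite /ent /cross exchange_big -big_split; apply: eq_bigr => e _ /=.
rewrite cross_edge //; congr (_ + _).
rewrite /arc_head /arc_tail; case: (D e) => //.
by case: (end1 e \in cover P); case: (end2 e \in cover P) => //=; rewrite eq_sym.
Qed.

Lemma cap_good D D' (F : {set {set V}}) : cstrong D -> cstrong D' ->
  (forall Z, Z \in F -> intight D Z) ->
  ent D (\bigcap_(Z in F) Z) <= ent D' (\bigcap_(Z in F) Z).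
Proof.
move=> HD HD' HF; set Q := \bigcap_(Z in F) Z.
case: (set_0Vmem Q) => [->|[q qQ]].
  by rewrite /ent big1 // => e _; rewrite inE.
rewrite -(ent_revo D) -(ent_revo D').
have Hr := cstrong_revo HD; have Hr' := cstrong_revo HD'.
have qU : q \notin ~: Q by rewrite inE negbK.
have HU : forall u, u \in ~: Q ->
    exists Z, [/\ intight (revo D) Z, u \in Z & Z \subset ~: Q].
  move=> u; rewrite inE => uQ.
  have [Z0 HZ0 uZ0] : exists2 Z0, Z0 \in F & u \notin Z0.
    case: (boolP [exists Z0 in F, u \notin Z0]) => [/exists_inP [Z0 H1 H2]|/exists_inPn H].
      by exists Z0.
    by move: uQ; rewrite /Q; move/bigcapP; case => Z HZ; have := H Z HZ; rewrite negbK.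
  exists (~: Z0); split.
  - by rewrite /intight ent_revo; exact: HF.
  - by rewrite inE.
  - by rewrite setCS /Q; exact: bigcap_inf.
have [P [TP CP HP]] := blocks Hr qU HU.
have C1 := cross_formula (revo D) TP; have C2 := cross_formula (revo D') TP.
rewrite CP in C1 C2.
have L : \sum_(B in P) ent (revo D) B <= \sum_(B in P) ent (revo D') B.
  apply: leq_sum => B HB; have /eqP E1 := HP B HB; rewrite E1.
  have [x [y [Hx Hy]]] : exists x y, x \notin B /\ y \in B by apply: (@ent_pos_ex (revo D)); rewrite E1.
  exact: Hr' _ x y Hx Hy.
move: C1 C2 L; clear; lia.
Qed.

Definition inC D (X : {set V}) := exists P : {set {set V}}, [/\ trivIset P, cover P = X &
   forall Q, Q \in P -> exists F : {set {set V}},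
     (forall Z, Z \in F -> intight D Z) /\ Q = \bigcap_(Z in F) Z].

Lemma inC_good D D' X : cstrong D -> cstrong D' -> inC D X -> ent D X <= ent D' X.
Proof.
move=> HD HD' [P [TP CP HP]]; rewrite -CP.
have C1 := cross_formula D TP; have C2 := cross_formula D' TP.
have L : \sum_(B in P) ent D B <= \sum_(B in P) ent D' B.
  apply: leq_sum => B HB; have [F [HF ->]] := HP B HB; exact: cap_good.
move: C1 C2 L; clear; lia.
Qed.

Lemma inC_T D : inC D setT.
Proof.
exists [set setT]; split; first exact: trivIset1.
  exact: cover1.
move=> Q /set1P ->; exists set0; split; first by move=> Z; rewrite inE.
by rewrite big_set0.
Qed.

Lemma inC_I D X Y : inC D X -> inC D Y -> inC D (X :&: Y).
Proof.
move=> [P1 [T1 C1 H1]] [P2 [T2 C2 H2]].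
exists [set A :&: B | A in P1, B in P2]; split.
- apply/trivIsetP => C C' /imset2P [A1 B1 HA1 HB1 ->] /imset2P [A2 B2 HA2 HB2 ->] Hne.
  case: (eqVneq A1 A2) => [eA|nA].
    case: (eqVneq B1 B2) => [eB|nB]; first by move: Hne; rewrite eA eB eqxx.
    have := (trivIsetP T2) B1 B2 HB1 HB2 nB.
    by apply: disjointW; apply: subsetIr.
  have := (trivIsetP T1) A1 A2 HA1 HA2 nA.
  by apply: disjointW; apply: subsetIl.
- apply/setP => x; rewrite inE -C1 -C2; apply/bigcupP/andP.
    move=> [C /imset2P [A B HA HB ->]]; rewrite inE => /andP [xA xB].
    by split; apply/bigcupP; [exists A | exists B].
  move=> [xc1 xc2]; exists (pblock P1 x :&: pblock P2 x).
    by apply/imset2P; exists (pblock P1 x) (pblock P2 x); rewrite ?pblock_mem.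
  by rewrite inE !mem_pblock xc1 xc2.
- move=> C /imset2P [A B HA HB ->].
  have [F1 [HF1 EA]] := H1 A HA; have [F2 [HF2 EB]] := H2 B HB.
  exists (F1 :|: F2); split.
    by move=> Z; rewrite inE => /orP [/HF1|/HF2].
  by rewrite bigcap_setU EA EB.
Qed.

Lemma inC_S D w : cstrong D -> inC D (\bigcup_(Z | intight D Z && (w \notin Z)) Z).
Proof.
move=> HD.
have wU : w \notin \bigcup_(Z | intight D Z && (w \notin Z)) Z.
  by apply/bigcupP => [[Z /andP [_ wZ] wZ']]; rewrite wZ' in wZ.
have HU : forall u, u \in \bigcup_(Z | intight D Z && (w \notin Z)) Z ->
    exists Z, [/\ intight D Z, u \in Z & Z \subset \bigcup_(Z | intight D Z && (w \notin Z)) Z].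
  move=> u /bigcupP [Z /andP [tZ wZ] uZ]; exists Z; split => //.
  by apply: (bigcup_sup Z); rewrite tZ wZ.
have [P [TP CP HP]] := blocks HD wU HU.
exists P; split => // Q HQ; exists [set Q]; split.
  by move=> Z /set1P ->; exact: HP.
by rewrite big_set1.
Qed.

Lemma key D D' (X : {set V}) : cstrong D -> cstrong D' ->
  (forall w x, w \notin X -> x \in X -> exists Z, [/\ intight D Z, x \in Z & w \notin Z]) ->
  ent D X <= ent D' X.
Proof.
move=> HD HD' HX.
pose S w := \bigcup_(Z | intight D Z && (w \notin Z)) Z.
have -> : X = \bigcap_(w in ~: X) S w.
  apply/setP => x; apply/idP/bigcapP.
    move=> xX w; rewrite inE => wX; have [Z [tZ xZ wZ]] := HX w x wX xX.
    by apply/bigcupP; exists Z; rewrite ?tZ ?wZ.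
  move=> H; apply/negPn/negP => xX; have := H x; rewrite inE => /(_ xX).
  by move/bigcupP => [Z /andP [_ xZ] xZ']; rewrite xZ' in xZ.
apply: inC_good => //.
apply: (big_ind (inC D)); [exact: inC_T | exact: inC_I | move=> w _; exact: inC_S].
Qed.

Definition inner (X : {set V}) := \sum_e ((end1 e \in X) && (end2 e \in X) : nat).

Lemma sum_indeg D (X : {set V}) : \sum_(v in X) indeg end1 end2 D v = inner X + ent D X.
Proof.
under eq_bigr do rewrite indegE.
rewrite exchange_big /inner /ent -big_split; apply: eq_bigr => e _ /=.
rewrite sum_eq_in /arc_head /arc_tail.
by case: (D e); case: (end1 e \in X); case: (end2 e \in X).
Qed.

Lemma sum_sorted D (f : nat -> nat) :
  \sum_(z <- sorted_indeg end1 end2 D) f z = \sum_v f (indeg end1 end2 D v).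
Proof.
rewrite /sorted_indeg (perm_big _ (permEl (perm_sort _ _))) big_map big_enum /=.
by apply: eq_bigl => v; rewrite inE.
Qed.

Lemma sorted_sorted D : sorted (fun a b : nat => b <= a) (sorted_indeg end1 end2 D).
Proof. by apply: sort_sorted => a b; rewrite leq_total. Qed.

Lemma size_sorted D : size (sorted_indeg end1 end2 D) = #|V|.
Proof. by rewrite /sorted_indeg size_sort size_map -cardE. Qed.

Lemma cstrong_flip D s t p1 p2 : strongly_connected end1 end2 D ->
  dp D s t p1 -> dp D s t p2 -> ~~ has (fun e => e \in p2) p1 ->
  strongly_connected end1 end2 (flip D p1).
Proof.
move=> HD H1 H2 H3; apply: cstrong_strong => Z x y Hx Hy.
have F := flip_ent Z H1.
have C := strong_cstrong HD Hx Hy.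
case tZ: (t \in Z); case sZ: (s \in Z); rewrite tZ sZ /= in F; try lia.
have sZ' : s \notin Z by rewrite sZ.
have /hasP [e1 e1p He1] := walk_enters (proj1 (andP H1)) sZ' tZ.
have /hasP [e2 e2p He2] := walk_enters (proj1 (andP H2)) sZ' tZ.
have ne : e1 != e2.
  apply/negP => /eqP E12; move/hasPn: H3 => /(_ e1 e1p); by rewrite E12 e2p.
have := sum_ge_two (fun e => ((hd D e \in Z) && (tl D e \notin Z) : nat)) ne.
rewrite He1 He2 -/(ent D Z); lia.
Qed.

End Aux.

Section Lists.

Lemma exc_lex (a b : seq nat) : sorted (fun x y : nat => y <= x) a ->
  sorted (fun x y : nat => y <= x) b -> size a = size b -> ~~ lex_le a b ->
  exists j, \sum_(x <- b) (x - j) < \sum_(x <- a) (x - j).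
Proof.
have tr : transitive (fun x y : nat => y <= x).
  by move=> x y z h1 h2; exact: leq_trans h2 h1.
elim: a b => [|x a IH] [|y b] //= Sa Sb [Hs] Hl.
case: (ltngtP x y) => [xy|yx|exy].
- by move: Hl; rewrite xy.
- exists y; rewrite big1_seq.
    by rewrite big_cons; move: yx; clear; lia.
  move=> z /andP [_]; rewrite inE => /orP [/eqP ->|zb]; first by rewrite subnn.
  have := order_path_min tr Sb; move/allP => /(_ z zb) zy; apply/eqP; rewrite subn_eq0 //.
- move: Hl; rewrite exy eqxx ltnn /= => Hl.
  have [j Hj] := IH b (path_sorted Sa) (path_sorted Sb) Hs Hl.
  by exists j; rewrite !big_cons; move: Hj; clear; lia.
Qed.

Lemma sum_le_const (N x : nat) (s : seq nat) : 0 < N -> all (fun z => z <= x) s ->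
  \sum_(z <- s) N ^ z <= size s * N ^ x.
Proof.
move=> N0; elim: s => [|z s IH] /=; first by rewrite big_nil.
case/andP => zx /IH H; rewrite big_cons mulSn leq_add //; exact: leq_pexp2l.
Qed.

Lemma phi_lex (N : nat) (a b : seq nat) : 0 < N -> sorted (fun x y : nat => y <= x) a ->
  sorted (fun x y : nat => y <= x) b -> size a = size b -> size a < N -> lex_le a b ->
  \sum_(x <- a) N ^ x <= \sum_(x <- b) N ^ x.
Proof.
move=> N0.
have tr : transitive (fun x y : nat => y <= x).
  by move=> x y z h1 h2; exact: leq_trans h2 h1.
elim: a b => [|x a IH] [|y b] //= Sa Sb [Hs] HN.
case/orP => [xy|/andP [/eqP exy Hl]].
- have A : all (fun z => z <= x) (x :: a) by rewrite /= leqnn; exact: order_path_min tr Sa.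
  have L1 := sum_le_const N0 A.
  have L2 : (size (x :: a)) * N ^ x < N ^ y.
    apply: (@leq_trans (N ^ x.+1)); last exact: leq_pexp2l.
    by rewrite expnS ltn_mul2r expn_gt0 N0.
  apply: (leq_trans L1); apply: (leq_trans (ltnW L2)).
  by rewrite big_cons leq_addr.
- rewrite exy !big_cons leq_add2l; apply: IH => //.
  + exact: path_sorted Sa.
  + exact: path_sorted Sb.
  + exact: ltnW HN.
Qed.

End Lists.


Section Main.
Variables (V E : finType) (end1 end2 : E -> V).
Local Notation hd := (arc_head end1 end2).
Local Notation tl := (arc_tail end1 end2).
Local Notation dp := (dpath end1 end2).
Local Notation m := (indeg end1 end2).

Lemma exc_le D D' j : strongly_connected end1 end2 D -> strongly_connected end1 end2 D' ->
  ~ (exists s t : V, m D s + 2 <= m D t /\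
        exists p1 p2 : seq E, [/\ dp D s t p1, dp D s t p2 & ~~ has (fun e => e \in p2) p1]) ->
  \sum_v (m D v - j) <= \sum_v (m D' v - j).
Proof.
move=> HD HD' NC.
pose cut v h := [forall Z : {set V}, ((h \in Z) && (v \notin Z)) ==> (ent end1 end2 D Z != 1)].
pose X := [set v | [exists h, (j < m D h) && ((v == h) || cut v h)]].
have mX v : v \in X -> j <= m D v.
  rewrite inE => /existsP [h /andP [jh /orP [/eqP -> | Hc]]]; first exact: ltnW.
  case: (eqVneq v h) => [->|vh]; first exact: ltnW.
  have Hcut : forall Z : {set V}, h \in Z -> v \notin Z -> ent end1 end2 D Z != 1.
    by move=> Z hZ vZ; move/forallP: Hc => /(_ Z); rewrite hZ vZ.
  have [p1 [p2 [H1 H2 H3]]] := menger2 HD vh Hcut.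
  rewrite leqNgt; apply/negP => vj; apply: NC; exists v, h; split.
    by move: vj jh; clear; lia.
  by exists p1, p2; split.
have outX v : v \notin X -> m D v <= j.
  move=> vX; rewrite leqNgt; apply/negP => jv; move/negP: vX; apply.
  by rewrite inE; apply/existsP; exists v; rewrite jv eqxx.
have HX w x : w \notin X -> x \in X ->
    exists Z, [/\ intight end1 end2 D Z, x \in Z & w \notin Z].
  move=> wX; rewrite inE => /existsP [h /andP [jh Hxh]].
  have nw : ~~ cut w h.
    apply/negP => Hc; move/negP: wX; apply; rewrite inE; apply/existsP; exists h.
    by rewrite jh Hc orbT.
  move: nw; rewrite negb_forall => /existsP [Z]; rewrite negb_imply negbK.
  case/andP => /andP [hZ wZ] tZ.
  exists Z; split => //; case/orP: Hxh => [/eqP -> //|Hc].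
  apply/negPn/negP => xZ; move/forallP: Hc => /(_ Z).
  by rewrite hZ xZ /= tZ.
have K := key (strong_cstrong HD) (strong_cstrong HD') HX.
have S1 := sum_indeg end1 end2 D X; have S2 := sum_indeg end1 end2 D' X.
have A1 : \sum_v (m D v - j) = \sum_(v in X) (m D v - j).
  rewrite (bigID (fun v => v \in X)) /= [X in _ + X]big1 ?addn0 //.
  by move=> v /outX; rewrite -subn_eq0 => /eqP.
have A2 : \sum_(v in X) (m D' v - j) <= \sum_v (m D' v - j).
  by rewrite [X in _ <= X](bigID (fun v => v \in X)) /= leq_addr.
have A3 : \sum_(v in X) (m D v - j) + \sum_(v in X) j = \sum_(v in X) m D v.
  rewrite -big_split; apply: eq_bigr => v /mX h /=; lia.
have A4 : \sum_(v in X) m D' v <= \sum_(v in X) (m D' v - j) + \sum_(v in X) j.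
  rewrite -big_split; apply: leq_sum => v _ /=; clear; lia.
rewrite A1; move: A2 A3 A4 S1 S2 K; clear; lia.
Qed.

Lemma phi_strict D D1 s t N : 1 < N -> s != t -> m D s + 2 <= m D t ->
  (forall v, m D1 v + (t == v) = m D v + (s == v)) ->
  \sum_v N ^ (m D1 v) < \sum_v N ^ (m D v).
Proof.
move=> N1 st Hst H.
have ts : t != s by rewrite eq_sym.
rewrite (bigD1 s) //= (bigD1 t) /= ?ts //.
rewrite [X in _ < X](bigD1 s) //= [X in _ < _ + X](bigD1 t) /= ?ts //.
have R : \sum_(i | (i != s) && (i != t)) N ^ m D1 i = \sum_(i | (i != s) && (i != t)) N ^ m D i.
  apply: eq_bigr => v /andP [vs vt]; have := H v.
  rewrite [t == v]eq_sym [s == v]eq_sym (negbTE vs) (negbTE vt) !addn0 => ->.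
  done.
rewrite R.
have Hs := H s; rewrite eqxx (negbTE ts) addn0 in Hs.
have Ht := H t; rewrite eqxx (negbTE st) addn0 in Ht.
have -> : m D1 s = (m D s).+1 by rewrite Hs addn1.
have Emt : m D t = (m D1 t).+1 by rewrite -Ht addn1.
rewrite Emt !expnS.
have L : N ^ (m D s).+1 <= N ^ (m D1 t).
  apply: leq_pexp2l; first by apply: ltnW.
  by move: Hst; rewrite Emt; clear; lia.
rewrite expnS in L.
have P0 : 0 < N ^ (m D s) by rewrite expn_gt0 ltnW.
move: L P0 N1; clear; nia.
Qed.

End Main.

Theorem theorem6p1 (V E : finType) (end1 end2 : E -> V) :
  (exists D0 : E -> bool, strongly_connected end1 end2 D0) ->
  forall D : E -> bool, strongly_connected end1 end2 D ->
  (decmin_strong end1 end2 D <->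
   ~ (exists s t : V,
        indeg end1 end2 D s + 2 <= indeg end1 end2 D t /\
        exists p1 p2 : seq E,
          [/\ dpath end1 end2 D s t p1, dpath end1 end2 D s t p2
            & ~~ has (fun e => e \in p2) p1])).
Proof.
move=> _ D HD; split.
- move=> [_ Hmin] [s [t [Hst [p1 [p2 [H1 H2 H3]]]]]].
  have st : s != t by apply/negP => /eqP Est; move: Hst; rewrite Est; clear; lia.
  pose D1 := flip D p1.
  have HD1 : strongly_connected end1 end2 D1 := cstrong_flip HD H1 H2 H3.
  have Hl := Hmin D1 HD1.
  have Hm : forall v, indeg end1 end2 D1 v + (t == v) = indeg end1 end2 D v + (s == v).
    by move=> v; exact: flip_indeg H1.
  have N1 : 1 < #|V|.+2 by [].
  have Hlt := phi_strict N1 st Hst Hm.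
  have := phi_lex (ltnW N1) (sorted_sorted end1 end2 D) (sorted_sorted end1 end2 D1)
            _ _ Hl.
  rewrite !size_sorted !sum_sorted => /(_ erefl (leqnSn _)) Hle.
  by move: Hle Hlt; clear; lia.
- move=> NC; split => // D' HD'.
  apply/negPn/negP => Hl.
  have [j Hj] := exc_lex (sorted_sorted end1 end2 D) (sorted_sorted end1 end2 D')
                    (etrans (size_sorted end1 end2 D) (esym (size_sorted end1 end2 D'))) Hl.
  rewrite !sum_sorted in Hj.
  have := exc_le j HD HD' NC.
  by move: Hj; clear; lia.
Qed.
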